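(* Let $A$ be a $DP$ algebra over $R$. Then $A$ admits a structure of abelian group object in $\mathbf{DPAlg}_R$ if and only if the multiplication of $A$ is identically zero ($ab=0$ for all $a,b\in A$), i.e. if and only if $A$ is an abelian group object in the category of (non-unital commutative) $R$-algebras; in that case the group operation is necessarily the addition of $A$. Moreover, if the multiplication of $A$ is zero then: (i) $\gamma_n=0$ for every $n\ge 2$ that is not a power of a prime; (ii) for every prime $p$, $\gamma_p$ is additive, $p\,\gamma_p(a)=0$ and $\gamma_p(ra)=r^p\gamma_p(a)$ for all $a\in A$, $r\in R$; (iii) for every prime $p$ and $e\ge1$, $\gamma_{p^e}=\gamma_p\circ\gamma_p\circ\cdots\circ\gamma_p$ ($e$-fold composite), and $p\,\gamma_{p^e}=0$.
   Context: Fix a commutative unital ring $R$; unadorned $\otimes$ means $\otimes_R$. An ''algebra'' means a commutative, not necessarily unital, $R$-algebra. A $DP$ (divided power) algebra is an algebra $A$ together with maps $\gamma_n:A\to A$ ($n\ge1$) such that for all $a,b\in A$, $r\in R$, $m,n\ge1$: $\gamma_1(a)=a$; $\gamma_n(a+b)=\gamma_n(a)+\sum_{i+j=n,\,i,j\ge1}\gamma_i(a)\gamma_j(b)+\gamma_n(b)$; $\gamma_n(ab)=a^n\gamma_n(b)$; $\gamma_n(rb)=r^n\gamma_n(b)$; $\gamma_m(a)\gamma_n(a)=\frac{(m+n)!}{m!\,n!}\gamma_{m+n}(a)$; $\gamma_m(\gamma_n(a))=\frac{(mn)!}{m!(n!)^m}\gamma_{mn}(a)$. Morphisms of $DP$ algebras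 are algebra maps commuting with all $\gamma_n$; this category is $\mathbf{DPAlg}_R$. Products in $\mathbf{DPAlg}_R$ are the products of underlying algebras with componentwise operations, and the terminal object is $0$. An abelian group object is an object with morphisms (multiplication, unit from the terminal object, inverse) satisfying the abelian group axioms. *)

(* Defs.v *)
From HB Require Import structures.
From mathcomp Require Import all_boot all_order all_algebra.
Set Implicit Arguments. Unset Strict Implicit. Unset Printing Implicit Defensive.
Import GRing.Theory.
Local Open Scope ring_scope.

Definition is_alg (R : comPzRingType) (A : lmodType R) (mul : A -> A -> A) :=
  [/\ forall a b c, mul (mul a b) c = mul a (mul b c),
      forall a b, mul a b = mul b a,
      forall a b c, mul (a + b) c = mul a c + mul b c
    & forall (r : R) a b, mul (r *: a) b = r *: mul a b].

(* Divided power axioms (only for indices n >= 1; gamma 0 is irrelevant). *)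
Definition is_dp (R : comPzRingType) (A : lmodType R) (mul : A -> A -> A)
    (gamma : nat -> A -> A) :=
  (forall a, gamma 1%N a = a) /\
  [/\ forall n a b, (1 <= n)%N -> gamma n (a + b) =
        gamma n a + \sum_(1 <= i < n) mul (gamma i a) (gamma (n - i)%N b) + gamma n b,
      forall n a b, (1 <= n)%N -> gamma n (mul a b) = iter n (mul a) (gamma n b),
      forall n (r : R) b, (1 <= n)%N -> gamma n (r *: b) = r ^+ n *: gamma n b,
      forall m n a, (1 <= m)%N -> (1 <= n)%N ->
        mul (gamma m a) (gamma n a) = gamma (m + n) a *+ 'C(m + n, m)
    & forall m n a, (1 <= m)%N -> (1 <= n)%N ->
        gamma m (gamma n a) = gamma (m * n) a *+ ((m * n)`! %/ (m`! * n`! ^ m))].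

Record dpalg (R : comPzRingType) := DPAlg {
  dp_carrier :> lmodType R;
  dp_mul : dp_carrier -> dp_carrier -> dp_carrier;
  dp_gamma : nat -> dp_carrier -> dp_carrier;
  dp_is_alg : is_alg dp_mul;
  dp_is_dp : is_dp dp_mul dp_gamma }.

Definition is_alg_hom (R : comPzRingType) (U V : lmodType R)
    (mulU : U -> U -> U) (mulV : V -> V -> V) (f : U -> V) :=
  [/\ forall x y, f (x + y) = f x + f y,
      forall (r : R) x, f (r *: x) = r *: f x
    & forall x y, f (mulU x y) = mulV (f x) (f y)].

Definition is_dp_hom (R : comPzRingType) (U V : lmodType R)
    (mulU : U -> U -> U) (gU : nat -> U -> U)
    (mulV : V -> V -> V) (gV : nat -> V -> V) (f : U -> V) :=
  is_alg_hom mulU mulV f /\ forall n x, (1 <= n)%N -> f (gU n x) = gV n (f x).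

(* Componentwise operations on the product A x A (the product in DPAlg_R
   and in Alg_R; the module structure on (A * A) is MathComp's product). *)
Definition prod_mul (R : comPzRingType) (A : lmodType R) (mul : A -> A -> A)
  (x y : (A * A)%type) : (A * A)%type := (mul x.1 y.1, mul x.2 y.2).
Definition prod_gamma (R : comPzRingType) (A : lmodType R) (g : nat -> A -> A)
  (n : nat) (x : (A * A)%type) : (A * A)%type := (g n x.1, g n x.2).

(* Abelian group object structure on A in a category of algebras whose
   morphisms are described by [hom] (algebra morphisms or DP morphisms).
   - [m : A * A -> A] is the multiplication, a morphism from the product;
   - the unit is a morphism u : 0 -> A from the terminal (zero) object; it is
     given by its value [e = u 0], and being a morphism from the zero
     algebra/DP algebra means exactly: e + e = e, r *: e = e, e * e = e, and
     gamma_n e = e (n >= 1) in the DP case ([hom_unit]);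
   - [i : A -> A] is the inverse;
   - the group axioms are the usual commutative diagrams, evaluated
     pointwise (the composite A -> 0 -> A is the constant map e). *)
Definition ab_group_object_axioms (A : Type) (m : (A * A)%type -> A) (e : A)
    (i : A -> A) :=
  [/\ forall a b c, m (m (a, b), c) = m (a, m (b, c)),
      forall a, m (e, a) = a /\ m (a, e) = a,
      forall a, m (i a, a) = e /\ m (a, i a) = e
    & forall a b, m (a, b) = m (b, a)].

Definition is_dp_ab_group_object (R : comPzRingType) (A : dpalg R)
    (m : (A * A)%type -> A) (e : A) (i : A -> A) :=
  [/\ is_dp_hom (prod_mul (@dp_mul R A)) (prod_gamma (@dp_gamma R A))
        (@dp_mul R A) (@dp_gamma R A) m,
      [/\ e + e = e, forall r : R, r *: e = e, dp_mul e e = e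
        & forall n, (1 <= n)%N -> dp_gamma n e = e],
      is_dp_hom (@dp_mul R A) (@dp_gamma R A) (@dp_mul R A) (@dp_gamma R A) i
    & ab_group_object_axioms m e i].

Definition is_alg_ab_group_object (R : comPzRingType) (A : dpalg R)
    (m : (A * A)%type -> A) (e : A) (i : A -> A) :=
  [/\ is_alg_hom (prod_mul (@dp_mul R A)) (@dp_mul R A) m,
      [/\ e + e = e, forall r : R, r *: e = e & dp_mul e e = e],
      is_alg_hom (@dp_mul R A) (@dp_mul R A) i
    & ab_group_object_axioms m e i].

(* Main.v *)
Require Import Defs.
From mathcomp Require Import all_boot all_order all_algebra.
From mathcomp Require Import ring.
Import GRing.Theory.
Local Open Scope ring_scope.
Set Implicit Arguments. Unset Strict Implicit.



Lemma frobX (p k : nat) : prime p -> ('X + 1 : {poly 'F_p}) ^+ (p ^ k) = 'X^(p ^ k) + 1.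
Proof.
move=> pp; rewrite exprDn_pchar ?expr1n //.
by rewrite pnatX pnatE // pchar_poly (pchar_Fp pp).
Qed.

Lemma coefXD1 (R : nzRingType) N i : (('X + 1 : {poly R}) ^+ N)`_i = (binomial N i)%:R.
Proof.
rewrite exprD1n coef_sum.
under eq_bigr do rewrite coefMn coefXn.
case: (ltnP i N.+1) => H.
  rewrite (bigD1 (Ordinal H)) //= eqxx big1 ?addr0 // => j /negbTE ne.
  suff -> : (i == j) = false by rewrite mul0rn.
  by apply/negbTE; apply: contraFN ne => /eqP e; apply/eqP/val_inj.
rewrite bin_small // big1 // => j _.
suff -> : (i == j) = false by rewrite mul0rn.
by apply/negbTE; rewrite neq_ltn; apply/orP; right; apply: leq_trans (ltn_ord j) H.
Qed.

Lemma coefXqD1 (R : nzRingType) q j i : (0 < i <= q)%N ->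
  (('X^q + 1 : {poly R}) ^+ j)`_i = if i == q then j%:R else 0.
Proof.
move=> /andP[i0 iq].
rewrite exprD1n coef_sum.
under eq_bigr do rewrite -exprM coefMn coefXn.
case: j => [|j]; first by rewrite big_ord_recl big_ord0 muln0 addr0 (gtn_eqF i0) mul0rn; case: eqP.
rewrite big_ord_recl big_ord_recl muln0 (gtn_eqF i0) mul0rn add0r big1.
  by rewrite addr0 /= muln1 bin1; case: eqP => _; rewrite ?mul0rn.
move=> t _; suff -> : (i == q * (lift ord0 (lift ord0 t)))%N = false by rewrite mul0rn.
apply/negbTE; rewrite neq_ltn; apply/orP; left.
apply: (@leq_ltn_trans q) => //; rewrite /= /bump /=.
by rewrite -[X in (X < _)%N]muln1 ltn_mul2l (leq_trans i0 iq).
Qed.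

Lemma binq_mod p v s : prime p -> ((binomial (p ^ v * s) (p ^ v))%:R : 'F_p) = s%:R.
Proof.
move=> pp; have q0 : (0 < p ^ v)%N by rewrite expn_gt0 prime_gt0.
by rewrite -(coefXD1 'F_p) exprM frobX // coefXqD1 ?eqxx // q0 leqnn.
Qed.

Lemma sign_q p k : prime p -> ((-1) ^+ (p ^ k - 1) : 'F_p) = 1.
Proof.
move=> pp; case: (eqVneq p 2) => [p2|p2].
  have h2 : (2 \in [pchar 'F_p])%N by have := pchar_Fp pp; rewrite [in X in X \in _]p2.
  by rewrite (oppr_pchar2 h2) expr1n.
have op : odd p by apply/negPn/negP => /(prime_oddPn pp) e; rewrite e eqxx in p2.
have oq : odd (p ^ k) by rewrite oddX op orbT.
have q0 : (0 < p ^ k)%N by rewrite expn_gt0 prime_gt0.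
rewrite -signr_odd; move: oq; rewrite -(prednK q0) subn1 /= => /negbTE -> //.
Qed.
Lemma binm1 p k j : prime p -> (0 < j)%N ->
  ((binomial (j * p ^ k - 1) (p ^ k - 1))%:R : 'F_p) = 1.
Proof.
move=> pp j0; set q := (p ^ k)%N.
have q0 : (0 < q)%N by rewrite expn_gt0 prime_gt0.
set P := ('X + 1 : {poly 'F_p}) ^+ (j * q - 1).
have HP : P * ('X + 1) = ('X^q + 1) ^+ j.
  rewrite -exprSr subn1 prednK; last by rewrite muln_gt0 j0.
  rewrite mulnC exprM. rewrite /q frobX //. 
have step : forall i, (i < q)%N -> P`_i = (-1) ^+ i.
  elim=> [|i IH] Hi; first by rewrite /P coefXD1 bin0 expr0.
  have := congr1 (fun r : {poly 'F_p} => r`_i.+1) HP.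
  rewrite /= mulrDr mulr1 coefD coefMX /=.
  rewrite coefXqD1; last by apply: ltnW.
  rewrite (ltn_eqF Hi).
  move/eqP; rewrite addrC addr_eq0 => /eqP ->.
  by rewrite IH ?(ltnW Hi) // exprS mulN1r.
rewrite -(coefXD1 'F_p). by rewrite -/P step ?sign_q // subn1 ltn_predL.
Qed.
Lemma fact_prod m n : (0 < n)%N ->
  ((m * n)`! = (\prod_(1 <= j < m.+1) binomial (j * n - 1) (n - 1)) * (m`! * n`! ^ m))%N.
Proof.
case: n => [//|n] _; rewrite subn1 /=.
elim: m => [|m IH]; first by rewrite mul0n big_geq.
rewrite big_nat_recr //=.
set N := (m.+1 * n.+1)%N.
have e1 : (N - n.+1 = m * n.+1)%N by rewrite /N mulSn addKn.
have e2 : 'C(N, n.+1) = (m.+1 * 'C(N.-1, n))%N.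
  apply/eqP; rewrite -(eqn_pmul2l (ltn0Sn n)) -mul_bin_diag /N.
  by apply/eqP; ring.
have := @bin_fact N n.+1 (leq_pmull n.+1 (ltn0Sn m)); rewrite e1 IH e2 => <-.
rewrite subn1 [(m.+1)`!]factS expnS.
set Pm := \prod_(_ <= _ < _) _; set E := (_ ^ m)%N; set C := binomial N.-1 n.
ring.
Qed.

Lemma cmod p k : prime p ->
  (((p * p ^ k)`! %/ (p`! * (p ^ k)`! ^ p)) %% p = 1)%N.
Proof.
move=> pp; have q0 : (0 < p ^ k)%N by rewrite expn_gt0 prime_gt0.
rewrite fact_prod // mulnK; last by rewrite muln_gt0 fact_gt0 expn_gt0 fact_gt0.
rewrite -val_Fp_nat // natr_prod.
rewrite big_nat_cond big1 => [|j /andP[/andP[j1 _] _]]; last by rewrite binm1.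
have := val_Fp_nat pp 1; rewrite mulr1n => ->.
by rewrite modn_small // prime_gt1.
Qed.

Lemma gcd_tor (V : zmodType) (x : V) a b : x *+ a = 0 -> x *+ b = 0 -> x *+ gcdn a b = 0.
Proof.
move=> ha hb; case: (posnP a) => [->|a0]; first by rewrite gcd0n.
case: (Bezoutl b a0) => u _ /dvdnP [t ht].
have := congr1 (fun n => x *+ n) ht; rewrite /= mulrnDr mulnC mulrnA hb mul0rn addr0.
by rewrite mulnC mulrnA ha mul0rn.
Qed.

Lemma mod_tor (V : zmodType) (x : V) p c : x *+ p = 0 -> x *+ c = x *+ (c %% p).
Proof.
by move=> hp; rewrite {1}(divn_eq c p) mulrnDr mulnC mulrnA hp mul0rn add0r.
Qed.

Lemma min_tor (V : zmodType) (x : V) n : (0 < n)%N -> x *+ n = 0 ->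
  exists2 c0, (0 < c0)%N & x *+ c0 = 0 /\ forall c, x *+ c = 0 -> (c0 %| c)%N.
Proof.
move=> n0 hn.
have ex : exists c, (0 < c)%N && (x *+ c == 0) by exists n; rewrite n0 hn eqxx.
case: (ex_minnP ex) => c0 /andP [c00 /eqP hc0] hmin.
exists c0 => //; split => // c hc.
have g0 : (0 < gcdn c0 c)%N by rewrite gcdn_gt0 c00.
have hg := gcd_tor hc0 hc.
have : (c0 <= gcdn c0 c)%N by apply: hmin; rewrite g0 hg eqxx.
move=> le; apply/gcdn_idPl; apply/eqP; rewrite eqn_leq le andbT.
by apply: dvdn_leq => //; exact: dvdn_gcdl.
Qed.

Section Fwd.
Variables (R : comPzRingType) (A : dpalg R).

Lemma mul0l (b : A) : dp_mul 0 b = 0.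
Proof. case: (dp_is_alg A) => _ _ _ mZ. by have := mZ 0 0 b; rewrite !scale0r. Qed.

Lemma mul0r (b : A) : dp_mul b 0 = 0.
Proof. case: (dp_is_alg A) => _ mC _ _. by rewrite mC mul0l. Qed.

Lemma pair_split (a b : A) : ((a, b) : (A * A)%type) = (a, 0) + (0, b).
Proof. have -> : (a, 0) + (0, b) = ((a + 0, 0 + b) : (A * A)%type) by []. by rewrite addr0 add0r. Qed.

Lemma fwd (m : (A * A)%type -> A) e :
  (forall x y, m (x + y) = m x + m y) ->
  (forall x y, m (prod_mul (@dp_mul R A) x y) = dp_mul (m x) (m y)) ->
  e + e = e -> (forall a, m (e, a) = a /\ m (a, e) = a) ->
  (forall a b, m (a, b) = a + b) /\ (forall a b : A, dp_mul a b = 0).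
Proof.
move=> hadd hmul ee hu.
have e0 : e = 0 by apply: (addrI e); rewrite addr0.
subst e.
have hab : forall a b, m (a, b) = a + b.
  move=> a b; rewrite pair_split hadd.
  by rewrite (proj2 (hu a)) (proj1 (hu b)).
split => // a b.
have := hmul (a, 0) (0, b); rewrite /prod_mul /= mul0l mul0r.
by rewrite (proj1 (hu 0)) (proj2 (hu a)) (proj1 (hu b)).
Qed.
End Fwd.

Section Zero.
Variables (R : comPzRingType) (A : dpalg R).
Hypothesis Z : forall a b : A, dp_mul a b = 0.
Local Notation g := (@dp_gamma R A).

Lemma gadd n (a b : A) : (1 <= n)%N -> g n (a + b) = g n a + g n b.
Proof.
case: (dp_is_dp A) => _ [gD _ _ _ _] n1.
by rewrite gD // big1 ?addr0 // => i _; rewrite Z.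
Qed.

Lemma g0 n : (1 <= n)%N -> g n (0 : A) = 0.
Proof. move=> n1; apply: (addrI (g n 0)); by rewrite -gadd // !addr0. Qed.

Lemma gN n (a : A) : (1 <= n)%N -> g n (- a) = - g n a.
Proof.
move=> n1; apply/eqP; rewrite -addr_eq0 addrC -gadd // subrr g0 //.
Qed.

Lemma gbin n k (a : A) : (0 < k < n)%N -> g n a *+ binomial n k = 0.
Proof.
case: (dp_is_dp A) => _ [_ _ _ gMM _] /andP [k0 kn].
have nk : (1 <= n - k)%N by rewrite subn_gt0.
have h := gMM k (n - k)%N a k0 nk.
have h' : g n a *+ binomial n k = dp_mul (g k a) (g (n - k) a).
  by rewrite h; congr (g _ a *+ binomial _ _); apply/esym/subnKC; exact: ltnW.
by rewrite h' Z.
Qed.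

Lemma gtor n (a : A) : (2 <= n)%N -> g n a *+ n = 0.
Proof. by move=> n2; rewrite -{2}(bin1 n) gbin // n2. Qed.

Lemma gi n (a : A) : (2 <= n)%N -> ~ (exists p k, prime p /\ n = (p ^ k)%N) -> g n a = 0.
Proof.
move=> n2 np.
have n0 : (0 < n)%N by exact: ltnW.
have [c0 c00 [hc0 hdiv]] := min_tor n0 (gtor a n2).
case: (leqP c0 1) => c1.
  have e1 : c0 = 1%N by apply/eqP; rewrite eqn_leq c1 c00.
  by rewrite e1 mulr1n in hc0.
set p := pdiv c0.
have pp : prime p := pdiv_prime c1.
have pc : (p %| c0)%N := pdiv_dvd c0.
have [s cps ns] := pfactor_coprime pp n0.
set q := (p ^ logn p n)%N in ns.
have q0 : (0 < q)%N by rewrite expn_gt0 prime_gt0.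
have s0 : (0 < s)%N by move: n0; rewrite ns muln_gt0 => /andP[].
have s1 : (1 < s)%N.
  rewrite ltn_neqAle s0 andbT; apply/negP => /eqP es.
  by apply: np; exists p, (logn p n); split => //; rewrite {1}ns -es mul1n.
have qn : (q < n)%N by rewrite ns ltn_Pmull.
have hb : g n a *+ binomial n q = 0 by apply: gbin; rewrite q0 qn.
have := dvdn_trans pc (hdiv _ hb).
rewrite (dvdn_pcharf (pchar_Fp pp)) ns mulnC binq_mod // -(dvdn_pcharf (pchar_Fp pp)).
by move=> ps; move: cps; rewrite prime_coprime // ps.
Qed.

Lemma giii p k (a : A) : prime p -> (1 <= k)%N ->
  g (p ^ k)%N a = iter k (g p) a /\ g (p ^ k)%N a *+ p = 0.
Proof.
case: (dp_is_dp A) => _ [_ _ _ _ gC].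
move=> pp; elim: k a => [//|k IH] a _.
have p2 : (2 <= p)%N by exact: prime_gt1.
case: (posnP k) => [->|k0].
  by rewrite expn1 /=; split => //; apply: gtor.
have [IH1 IH2] := IH a k0.
set q := (p ^ k)%N in IH1 IH2.
have q0 : (0 < q)%N by rewrite expn_gt0 prime_gt0.
have h := gC p q a (prime_gt0 pp) q0.
set c := (_ %/ _)%N in h.
have hcm : (c %% p = 1)%N by exact: cmod.
set x := g (p ^ k.+1)%N a.
have h' : g p (g q a) = x *+ c by rewrite h /x expnS.
have hx1 : x *+ (c * p) = 0 by rewrite mulrnA -h' gtor.
have hx2 : x *+ (p * q) = 0.
  rewrite /q -expnS /x gtor //.
  by rewrite -[1%N](expn0 p) ltn_exp2l.
have hx := gcd_tor hx1 hx2.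
have cq : coprime c q by rewrite /q coprime_pexpr // -coprime_modl hcm coprime1n.
rewrite mulnC -muln_gcdr (eqP cq) muln1 in hx.
have ex : x = g p (g q a) by rewrite h' (mod_tor c hx) hcm mulr1n.
by split => //; rewrite -/x ex IH1.
Qed.
End Zero.

Theorem mainTheorem1 (R : comPzRingType) (A : dpalg R) :
  let mul := @dp_mul R A in
  let gamma := @dp_gamma R A in
  [/\ (exists m e i, @is_dp_ab_group_object R A m e i) <-> (forall a b : A, mul a b = 0),
      (exists m e i, @is_alg_ab_group_object R A m e i) <-> (forall a b : A, mul a b = 0),
      forall m e i, @is_dp_ab_group_object R A m e i -> forall a b : A, m (a, b) = a + b
    & (forall a b : A, mul a b = 0) ->
      [/\ (* (i) *)
          forall n, (2 <= n)%N -> ~ (exists p k, prime p /\ n = (p ^ k)%N) ->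
            forall a : A, gamma n a = 0,
          (* (ii) *)
          forall p, prime p ->
            [/\ forall a b : A, gamma p (a + b) = gamma p a + gamma p b,
                forall a : A, gamma p a *+ p = 0
              & forall (r : R) (a : A), gamma p (r *: a) = r ^+ p *: gamma p a]
        & (* (iii) *)
          forall p k, prime p -> (1 <= k)%N ->
            (forall a : A, gamma (p ^ k)%N a = iter k (gamma p) a) /\
            (forall a : A, gamma (p ^ k)%N a *+ p = 0)]].
Proof.
move=> mul gamma; subst mul gamma.
have fwdDP : forall m e i, @is_dp_ab_group_object R A m e i ->
    (forall a b, m (a, b) = a + b) /\ (forall a b : A, dp_mul a b = 0).
  move=> m e i [[[hadd _ hmul] _] [ee _ _ _] _ [_ hu _ _]].
  exact: fwd hadd hmul ee hu.
have fwdAlg : forall m e i, @is_alg_ab_group_object R A m e i ->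
    (forall a b : A, dp_mul a b = 0).
  move=> m e i [[hadd _ hmul] [ee _ _] _ [_ hu _ _]].
  exact: (fwd hadd hmul ee hu).2.
have ax : ab_group_object_axioms (fun x : (A * A)%type => x.1 + x.2) 0 (fun a : A => - a).
  split.
  - by move=> a b c /=; rewrite addrA.
  - by move=> a /=; rewrite add0r addr0.
  - by move=> a /=; rewrite addNr subrr.
  - by move=> a b /=; rewrite addrC.
have halg : forall Z : (forall a b : A, dp_mul a b = 0),
    is_alg_hom (prod_mul (@dp_mul R A)) (@dp_mul R A) (fun x : (A * A)%type => x.1 + x.2).
  move=> Z; split.
  - by move=> x y /=; rewrite addrACA.
  - by move=> r x /=; rewrite scalerDr.
  - by move=> x y; rewrite /prod_mul /= !Z addr0.
have ialg : forall Z : (forall a b : A, dp_mul a b = 0),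
    is_alg_hom (@dp_mul R A) (@dp_mul R A) (fun a : A => - a).
  move=> Z; split.
  - by move=> x y; rewrite opprD.
  - by move=> r x; rewrite scalerN.
  - by move=> x y; rewrite !Z oppr0.
split.
- split; first by case=> m [e [i /fwdDP []]].
  move=> Z; exists (fun x => x.1 + x.2), 0, (fun a => - a); split => //.
  + split; first exact: halg.
    by move=> n x n1; rewrite /prod_gamma /= gadd.
  + split; [exact: addr0 | exact: scaler0 | exact: Z | ].
    by move=> n n1; rewrite g0.
  + split; first exact: ialg.
    by move=> n x n1; rewrite gN.
- split; first by case=> m [e [i /fwdAlg]].
  move=> Z; exists (fun x => x.1 + x.2), 0, (fun a => - a); split => //.
  + exact: halg.
  + split; [exact: addr0 | exact: scaler0 | exact: Z].
  + exact: ialg.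
- by move=> m e i /fwdDP [].
move=> Z; split.
- by move=> n n2 np a; apply: gi.
- move=> p pp; have p1 : (1 <= p)%N by exact: prime_gt0.
  split.
  + by move=> a b; rewrite gadd.
  + by move=> a; apply: gtor => //; exact: prime_gt1.
  + case: (dp_is_dp A) => _ [_ _ gZ _ _].
    by move=> r a; rewrite gZ.
- move=> p k pp k1; split => a; by have [] := giii Z a pp k1.
Qed.
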